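(* Let a countable group $G$ act on a set $X$, let $\Phi=(\ell,\phi,\mathcal{Z},\Gamma,\mathcal{H})$ be a chart for $G$, let $0<\epsilon<1/16$, let $q$ satisfy $6\epsilon<q<1/2$, and let $A\subseteq\mathbb{Z}^\ell\times\Gamma$ be a centered rectangle. Suppose $E$ is a $(\Phi,A,\epsilon)$-sub-rectangular equivalence relation on $X$. Let $x\in X^{\mathcal{H}}$ and $1\le i\le\ell$. If $y_1,\dots,y_t\in\partial_i^\Phi(E,q\cdot A)\cap\phi(2^{17\ell}\cdot A)\cdot x$ satisfy $$\phi\big(2^{19\ell}\cdot A^i+5q\cdot A\big)\cdot y_r\cap\phi\big(2^{19\ell}\cdot A^i+5q\cdot A\big)\cdot y_s=\varnothing$$ for all $r\ne s$, then $t\le 2^{22\ell^2}$.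
   Context: Rectangles: Let $\Gamma$ be a finite additive abelian group with identity $0_\Gamma$ and $\ell\in\mathbb{N}$. Elements $v$ of $\mathbb{R}^\ell\times\Gamma$ have coordinates $v_1,\dots,v_\ell\in\mathbb{R}$, $v_{\ell+1}\in\Gamma$; $\mathbf{0}$ has first $\ell$ coordinates $0$, last $0_\Gamma$; $e_i$ has $i$-th coordinate $1$, other real coordinates $0$, last $0_\Gamma$; $\lambda\cdot v=(\lambda v_1,\dots,\lambda v_\ell,v_{\ell+1})$. $\mathrm{Rec}(a)=\{b\in\mathbb{Z}^\ell\times\Gamma: -|a_i|\le b_i\le|a_i|,\ 1\le i\le\ell\}$. A rectangle is $c+\mathrm{Rec}(a)$ with $c,a\in\mathbb{Z}^\ell\times\Gamma$; uniquely written with center $c\in\mathbb{Z}^\ell\times\{0_\Gamma\}$ and radius vector $\mathrm{L}(A)=a\in\mathbb{N}^\ell\times\{0_\Gamma\}$, entries $\mathrm{L}_i(A)$. Centered means center $\mathbf{0}$. $A\sqsubseteq B$ means $\mathrm{L}_i(A)\le\mathrm{L}_i(B)$ for all $i$. For $\lambda>0$, $\lambda\cdot A=c+\mathrm{Rec}(\lambda\cdot\mathrm{L}(A))$ ($c$ the center of $A$). $A^i=c+\mathrm{Rec}(\mathrm{L}(A)-\mathrm{L}_i(A)\cdot e_i)$, and $\lambda\cdot A^i$ means $\lambda\cdot(A^i)$. Sums are elementwise. Charts: a chart for $G$ is $\Phi=(\ell,\phi,\mathcal{Z},\Gamma,\mathcal{H})$ with $\mathcal{H}$ a finite collection of pairwise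 conjugate subgroups of $G$, $\Gamma$ finite abelian, $\mathcal{Z}$ a centered rectangle with all $\mathrm{L}_i(\mathcal{Z})>0$, $\phi$ an injective map into $G$ with $\mathrm{dom}(\phi)$ a centered rectangle containing $3\cdot\mathcal{Z}$, $\phi(\mathbf{0})=1_G$, and for all $r,s\in\mathrm{dom}(\phi)$, $H\in\mathcal{H}$: $\phi(r)H=\phi(s)H\Rightarrow r=s$; $r+s+\mathcal{Z}\subseteq\mathrm{dom}(\phi)\Rightarrow\exists z\in\mathcal{Z}:\phi(r)\phi(s)H=\phi(r+s+z)H$; $r-s+\mathcal{Z}\subseteq\mathrm{dom}(\phi)\Rightarrow\exists z:\phi(r)\phi(s)^{-1}H=\phi(r-s+z)H$; $-r+s+\mathcal{Z}\subseteq\mathrm{dom}(\phi)\Rightarrow\exists z:\phi(r)^{-1}\phi(s)H=\phi(-r+s+z)H$; $-s+\mathcal{Z}\subseteq\mathrm{dom}(\phi)\Rightarrow\exists z:\phi(s)^{-1}H=\phi(-s+z)H$. $\phi(S)\cdot x=\{\phi(s)\cdot x:s\in S\}$; $X^{\mathcal{H}}=\{x\in X:\mathrm{Stab}(x)\in\mathcal{H}\}$. Rough rectangles: for a rectangle $B$ with $2\cdot B\subseteq\mathrm{dom}(\phi)$, $x\in X^{\mathcal{H}}$, $0<\delta<1$, $R\subseteq X$ is $(\Phi,\delta)$-roughly $B$ at $x$ if $2\cdot\mathcal{Z}\sqsubseteq\delta\cdot B$ and $\phi((1-\delta)\cdot B)\cdot x\subseteq R\subseteq\phi((1+\delta)\cdot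 B)\cdot x$. Rectangular: for $A$ centered and $0<\epsilon<1$, an equivalence relation $F$ is $(\Phi,A,\epsilon)$-rectangular if every $F$-class not meeting $X^{\mathcal{H}}$ is a singleton and every $F$-class $U$ meeting $X^{\mathcal{H}}$ is $(\Phi,\delta)$-roughly $B$ at some point of $X^{\mathcal{H}}$ for some $\delta>0$ and rectangle $B$ with $A\sqsubseteq B$, $2^{22\ell}\cdot B\subseteq\mathrm{dom}(\phi)$, $2\delta\cdot B\sqsubseteq\epsilon\cdot A$. $E$ is $(\Phi,A,\epsilon)$-sub-rectangular if it contains a $(\Phi,A,\epsilon)$-rectangular sub-equivalence relation. Boundary: for $A'\subseteq\mathrm{dom}(\phi)$ centered and $1\le i\le\ell$, $\partial_i^\Phi(E,A')$ is the set of $x\in X^{\mathcal{H}}$ with $[\phi(A'^i-\mathrm{L}_i(A')\cdot e_i)\cdot x]_E\cap[\phi(A'^i+\mathrm{L}_i(A')\cdot e_i)\cdot x]_E=\varnothing$, $[Y]_E$ denoting $E$-saturation. *)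

(* Defs.v *)
From HB Require Import structures.
From mathcomp Require Import all_boot all_order all_algebra.
From mathcomp Require Import Rstruct.
From Stdlib Require Rdefinitions.
Notation R := Rdefinitions.R.
Set Implicit Arguments. Unset Strict Implicit. Unset Printing Implicit Defensive.
Import Order.TTheory GRing.Theory Num.Theory.
Local Open Scope ring_scope.

Record group_on (G : Type) := GroupOn {
  gmul : G -> G -> G; gone : G; ginv : G -> G;
  gmulA : forall a b c, gmul a (gmul b c) = gmul (gmul a b) c;
  gmul1 : forall a, gmul a gone = a;
  g1mul : forall a, gmul gone a = a;
  gmulV : forall a, gmul a (ginv a) = gone;
  gVmul : forall a, gmul (ginv a) a = gone }.

Definition is_action (G X : Type) (Gg : group_on G) (act : G -> X -> X) :=
  (forall x, act (gone Gg) x = x) /\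
  (forall g h x, act (gmul Gg g h) x = act g (act h x)).

Definition is_subgroup (G : Type) (Gg : group_on G) (H : G -> Prop) :=
  H (gone Gg) /\ (forall a b, H a -> H b -> H (gmul Gg a b)) /\
  (forall a, H a -> H (ginv Gg a)).

Definition set_eq (T : Type) (S1 S2 : T -> Prop) := forall z, S1 z <-> S2 z.

Definition lcoset (G : Type) (Gg : group_on G) (g : G) (H : G -> Prop) : G -> Prop :=
  fun y => exists h, H h /\ y = gmul Gg g h.

Definition conj_set (G : Type) (Gg : group_on G) (g : G) (H : G -> Prop) : G -> Prop :=
  fun y => exists h, H h /\ y = gmul Gg (gmul Gg g h) (ginv Gg g).

Definition stab (G X : Type) (act : G -> X -> X) (x : X) : G -> Prop :=
  fun g => act g x = x.

Definition pt (l : nat) (Gam : finZmodType) := ({ffun 'I_l -> int} * Gam)%type.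

Definition padd l (Gam : finZmodType) (r s : pt l Gam) : pt l Gam :=
  ([ffun j => r.1 j + s.1 j], r.2 + s.2).
Definition popp l (Gam : finZmodType) (r : pt l Gam) : pt l Gam :=
  ([ffun j => - r.1 j], - r.2).
Definition pzero l (Gam : finZmodType) : pt l Gam := ([ffun _ => 0], 0).

Definition msum l (Gam : finZmodType) (S T : pt l Gam -> Prop) : pt l Gam -> Prop :=
  fun u => exists s t, S s /\ T t /\ u = padd s t.

(* ---------- (scaled) rectangles ----------
   A "srect" is a center c in Z^l (last coordinate 0_Gamma) together with a real
   radius vector a; it denotes the set c + Rec(a) = {b | |b_j - c_j| <= |a_j|}.  The scaled
   rectangle lambda.A has radius lambda.L(A); as a set it is the rectangle with
   radius floor(lambda.L(A)), so its radius vector L is the floor. *)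
Record srect (l : nat) := SRect { sc : {ffun 'I_l -> int}; sr : {ffun 'I_l -> R} }.

Definition rset l (Gam : finZmodType) (S : srect l) : pt l Gam -> Prop :=
  fun b => forall j, ((`|b.1 j - sc S j|)%:~R : R) <= `|sr S j|.

Definition is_rect l (S : srect l) := forall j, exists n : nat, sr S j = n%:R.
Definition is_centered_rect l (S : srect l) := is_rect S /\ forall j, sc S j = 0.

Definition Lr l (S : srect l) (j : 'I_l) : int := Num.floor `|sr S j|.

Definition rle l (S T : srect l) := forall j, Lr S j <= Lr T j.

Definition scale l (lam : R) (S : srect l) : srect l :=
  SRect (sc S) [ffun j => lam * sr S j].

Definition face l (S : srect l) (i : 'I_l) : srect l :=
  SRect (sc S) [ffun j => if j == i then 0 else sr S j].

Definition shift l (S : srect l) (i : 'I_l) (k : int) : srect l :=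
  SRect [ffun j => sc S j + (if j == i then k else 0)] (sr S).

Definition subset (T : Type) (S1 S2 : T -> Prop) := forall z, S1 z -> S2 z.

Record chart (G : Type) (l : nat) (Gam : finZmodType) := Chart {
  ch_phi : pt l Gam -> G;
  ch_dom : srect l;
  ch_Z : srect l;
  ch_H : seq (G -> Prop) }.

Definition is_chart (G : Type) (Gg : group_on G) l (Gam : finZmodType)
    (Phi : chart G l Gam) : Prop :=
  let phi := ch_phi Phi in
  let D := rset (Gam:=Gam) (ch_dom Phi) in
  let Z := rset (Gam:=Gam) (ch_Z Phi) in
  let mul := gmul Gg in let inv := ginv Gg in
  (forall H, List.In H (ch_H Phi) -> is_subgroup Gg H) /\
  (forall H1 H2, List.In H1 (ch_H Phi) -> List.In H2 (ch_H Phi) ->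
      exists g, set_eq H2 (conj_set Gg g H1)) /\
  is_centered_rect (ch_Z Phi) /\ (forall j, 0 < Lr (ch_Z Phi) j) /\
  is_centered_rect (ch_dom Phi) /\
  subset (rset (Gam:=Gam) (scale 3 (ch_Z Phi))) D /\
  (forall r s, D r -> D s -> phi r = phi s -> r = s) /\
  phi (pzero l Gam) = gone Gg /\
  (forall r s H, D r -> D s -> List.In H (ch_H Phi) ->
    (set_eq (lcoset Gg (phi r) H) (lcoset Gg (phi s) H) -> r = s) /\
    (subset (fun u => exists z, Z z /\ u = padd (padd r s) z) D ->
       exists z, Z z /\ set_eq (lcoset Gg (mul (phi r) (phi s)) H)
                               (lcoset Gg (phi (padd (padd r s) z)) H)) /\
    (subset (fun u => exists z, Z z /\ u = padd (padd r (popp s)) z) D ->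
       exists z, Z z /\ set_eq (lcoset Gg (mul (phi r) (inv (phi s))) H)
                               (lcoset Gg (phi (padd (padd r (popp s)) z)) H)) /\
    (subset (fun u => exists z, Z z /\ u = padd (padd (popp r) s) z) D ->
       exists z, Z z /\ set_eq (lcoset Gg (mul (inv (phi r)) (phi s)) H)
                               (lcoset Gg (phi (padd (padd (popp r) s) z)) H)) /\
    (subset (fun u => exists z, Z z /\ u = padd (popp s) z) D ->
       exists z, Z z /\ set_eq (lcoset Gg (inv (phi s)) H)
                               (lcoset Gg (phi (padd (popp s) z)) H))).

Definition inXH (G X : Type) (act : G -> X -> X) l (Gam : finZmodType)
    (Phi : chart G l Gam) (x : X) : Prop :=
  exists H, List.In H (ch_H Phi) /\ set_eq (stab act x) H.

(* phi(S) . w  (points of S outside dom(phi) are ignored; in all uses S ⊆ dom) *)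
Definition phiset (G X : Type) (act : G -> X -> X) l (Gam : finZmodType)
    (Phi : chart G l Gam) (S : pt l Gam -> Prop) (w : X) : X -> Prop :=
  fun z => exists s, S s /\ rset (Gam:=Gam) (ch_dom Phi) s /\ z = act (ch_phi Phi s) w.

Definition sat (X : Type) (E : X -> X -> Prop) (Y : X -> Prop) : X -> Prop :=
  fun z => exists y, Y y /\ E y z.

Definition is_equiv (X : Type) (E : X -> X -> Prop) :=
  (forall x, E x x) /\ (forall x y, E x y -> E y x) /\
  (forall x y z, E x y -> E y z -> E x z).

Definition roughly (G X : Type) (act : G -> X -> X) l (Gam : finZmodType)
    (Phi : chart G l Gam) (delta : R) (B : srect l) (w : X) (U : X -> Prop) :=
  is_rect B /\ subset (rset (Gam:=Gam) (scale 2 B)) (rset (Gam:=Gam) (ch_dom Phi)) /\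
  inXH act Phi w /\ 0 < delta < 1 /\
  rle (scale 2 (ch_Z Phi)) (scale delta B) /\
  subset (phiset act Phi (rset (Gam:=Gam) (scale (1 - delta) B)) w) U /\
  subset U (phiset act Phi (rset (Gam:=Gam) (scale (1 + delta) B)) w).

Definition rectangular (G X : Type) (act : G -> X -> X) l (Gam : finZmodType)
    (Phi : chart G l Gam) (A : srect l) (eps : R) (F : X -> X -> Prop) :=
  is_equiv F /\
  (forall x, ~ (exists y, F x y /\ inXH act Phi y) -> forall y, F x y -> y = x) /\
  (forall x, (exists y, F x y /\ inXH act Phi y) ->
     exists delta B w,
       inXH act Phi w /\ 0 < delta /\
       roughly act Phi delta B w (F x) /\
       rle A B /\
       subset (rset (Gam:=Gam) (scale (2 ^+ (22 * l))%:R B)) (rset (Gam:=Gam) (ch_dom Phi)) /\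
       rle (scale (2 * delta) B) (scale eps A)).

Definition sub_rectangular (G X : Type) (act : G -> X -> X) l (Gam : finZmodType)
    (Phi : chart G l Gam) (A : srect l) (eps : R) (E : X -> X -> Prop) :=
  exists F, rectangular act Phi A eps F /\ (forall x y, F x y -> E x y).

Definition boundary (G X : Type) (act : G -> X -> X) l (Gam : finZmodType)
    (Phi : chart G l Gam) (E : X -> X -> Prop) (A' : srect l) (i : 'I_l) (x : X) :=
  inXH act Phi x /\
  forall z,
    ~ (sat E (phiset act Phi (rset (Gam:=Gam) (shift (face A' i) i (- Lr A' i))) x) z /\
       sat E (phiset act Phi (rset (Gam:=Gam) (shift (face A' i) i (Lr A' i))) x) z).

(* Main.v *)
Require Import Defs.
From HB Require Import structures.
From mathcomp Require Import all_boot all_order all_algebra.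
From mathcomp Require Import Rstruct.
From mathcomp Require Import lra zify.
From Stdlib Require Classical_Prop.
Import Order.TTheory GRing.Theory Num.Theory.
Local Open Scope ring_scope.
Set Implicit Arguments. Unset Strict Implicit. Unset Printing Implicit Defensive.

Section Grp.
Variables (G X : Type) (Gg : group_on G) (act : G -> X -> X).
Hypothesis Hact : is_action Gg act.

Lemma act_mul g h x : act (gmul Gg g h) x = act g (act h x).
Proof. by case: Hact => _ ->. Qed.

Lemma act_one x : act (gone Gg) x = x.
Proof. by case: Hact. Qed.

Lemma act_invK g x : act (ginv Gg g) (act g x) = x.
Proof. by rewrite -act_mul gVmul act_one. Qed.

Lemma coset_act (g g' : G) H y : is_subgroup Gg H -> set_eq (stab act y) H ->
  set_eq (lcoset Gg g H) (lcoset Gg g' H) -> act g y = act g' y.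
Proof.
move=> [H1 _] Hst Hc.
have : lcoset Gg g H g by exists (gone Gg); rewrite gmul1.
move=> /Hc [h [Hh ->]]. rewrite act_mul.
by move: (proj2 (Hst h) Hh); rewrite /stab => ->.
Qed.

Lemma act_coset (g g' : G) H y : is_subgroup Gg H -> set_eq (stab act y) H ->
  act g y = act g' y -> set_eq (lcoset Gg g H) (lcoset Gg g' H).
Proof.
move=> [H1 [HM HI]] Hst He.
have K : forall g g', act g y = act g' y -> forall u, lcoset Gg g H u -> lcoset Gg g' H u.
  move=> a a' Ha u [h [Hh ->]].
  have Hs : H (gmul Gg (ginv Gg a') a).
    apply/(Hst _). by rewrite /stab act_mul Ha act_invK.
  exists (gmul Gg (gmul Gg (ginv Gg a') a) h); split; first exact: HM.
  by rewrite !gmulA gmulV g1mul.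
by move=> u; split; apply: K.
Qed.
End Grp.
Lemma floor_natR (n : nat) : Num.floor (n%:R : R) = n%:Z.
Proof. by rewrite pmulrn intrKfloor. Qed.

Lemma floor_le_nat (n : nat) (y : R) : Num.floor (n%:R : R) <= Num.floor y -> n%:R <= y.
Proof. by rewrite floor_natR floor_ge_int -pmulrn. Qed.

Lemma floor_le_lt (x y : R) : Num.floor x <= Num.floor y -> x < y + 1.
Proof.
move=> H; apply: (lt_le_trans (floorD1_gt x)).
rewrite intrD lerD2r. apply: le_trans (floor_le y). by rewrite ler_int.
Qed.

Lemma mult_between (m lo1 lo2 hi1 hi2 : R) : 0 < m ->
  lo1 + m <= hi1 -> lo1 + m <= hi2 -> lo2 + m <= hi1 -> lo2 + m <= hi2 ->
  exists k : int, [/\ lo1 <= k%:~R * m, k%:~R * m <= hi1, lo2 <= k%:~R * m & k%:~R * m <= hi2].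
Proof.
move=> m0 h11 h12 h21 h22.
have gen : forall h, h <= hi1 -> h <= hi2 -> lo1 + m <= h -> lo2 + m <= h ->
   exists k : int, [/\ lo1 <= k%:~R * m, k%:~R * m <= hi1, lo2 <= k%:~R * m & k%:~R * m <= hi2].
  move=> h e1 e2 e3 e4; exists (Num.floor (h / m)).
  have f1 := floor_le (h / m). have f2 := floorD1_gt (h / m).
  have g1 : (Num.floor (h / m))%:~R * m <= h.
    by rewrite -ler_pdivlMr.
  have g2 : h < (Num.floor (h / m))%:~R * m + m.
    rewrite -[X in _ < _ + X]mul1r -mulrDl -ltr_pdivrMr //.
    by move: f2; rewrite intrD.
  split; lra.
case: (lerP hi1 hi2) => H.
  apply: (gen hi1) => //. 
apply: (gen hi2) => //; lra.
Qed.
Lemma normP (x : R) : - `|x| <= x <= `|x|.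
Proof. by rewrite -ler_norml. Qed.
Section Chart.
Variables (G X : Type) (Gg : group_on G) (act : G -> X -> X).
Hypothesis Hact : is_action Gg act.
Variables (l : nat) (Gam : finZmodType) (Phi : chart G l Gam).
Hypothesis HPhi : is_chart Gg Phi.

Local Notation phi := (ch_phi Phi).
Local Notation Dom := (rset (Gam:=Gam) (ch_dom Phi)).
Local Notation Zs := (rset (Gam:=Gam) (ch_Z Phi)).
Local Notation XH := (inXH act Phi).

Lemma ch_subg H : List.In H (ch_H Phi) -> is_subgroup Gg H.
Proof. by case: HPhi => h _; apply: h. Qed.

Lemma ch_rules r s H : Dom r -> Dom s -> List.In H (ch_H Phi) ->
    (set_eq (lcoset Gg (phi r) H) (lcoset Gg (phi s) H) -> r = s) /\
    (Defs.subset (fun u => exists z, Zs z /\ u = padd (padd r s) z) Dom ->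
       exists z, Zs z /\ set_eq (lcoset Gg (gmul Gg (phi r) (phi s)) H)
                               (lcoset Gg (phi (padd (padd r s) z)) H)) /\
    (Defs.subset (fun u => exists z, Zs z /\ u = padd (padd r (popp s)) z) Dom ->
       exists z, Zs z /\ set_eq (lcoset Gg (gmul Gg (phi r) (ginv Gg (phi s))) H)
                               (lcoset Gg (phi (padd (padd r (popp s)) z)) H)).
Proof.
case: HPhi => _ [_ [_ [_ [_ [_ [_ [_ Hr]]]]]]] Dr Ds HH.
by case: (Hr r s H Dr Ds HH) => [h1 [h2 [h3 _]]].
Qed.

Lemma P_inj y u v : XH y -> Dom u -> Dom v -> act (phi u) y = act (phi v) y -> u = v.
Proof.
move=> [H [HH Hst]] Du Dv He.
case: (ch_rules Du Dv HH) => [Hi _]; apply: Hi.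
exact: (act_coset Hact (ch_subg HH) Hst He).
Qed.

Lemma P_mul y u b : XH y -> Dom u -> Dom b ->
  Defs.subset (fun v => exists z, Zs z /\ v = padd (padd u b) z) Dom ->
  exists z, Zs z /\ act (phi u) (act (phi b) y) = act (phi (padd (padd u b) z)) y.
Proof.
move=> [H [HH Hst]] Du Db Hs.
case: (ch_rules Du Db HH) => [_ [Hm _]].
case: (Hm Hs) => z [Hz Hc]; exists z; split => //.
rewrite -(act_mul Hact); exact: (coset_act Hact (ch_subg HH) Hst Hc).
Qed.

Lemma P_sub y u b : XH y -> Dom u -> Dom b ->
  Defs.subset (fun v => exists z, Zs z /\ v = padd (padd u (popp b)) z) Dom ->
  exists z, Zs z /\ act (phi u) (act (ginv Gg (phi b)) y) = act (phi (padd (padd u (popp b)) z)) y.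
Proof.
move=> [H [HH Hst]] Du Db Hs.
case: (ch_rules Du Db HH) => [_ [_ Hm]].
case: (Hm Hs) => z [Hz Hc]; exists z; split => //.
rewrite -(act_mul Hact); exact: (coset_act Hact (ch_subg HH) Hst Hc).
Qed.

Lemma rebase y y' u b : XH y' -> Dom u -> Dom b -> y' = act (phi b) y ->
  Defs.subset (fun v => exists z, Zs z /\ v = padd (padd u (popp b)) z) Dom ->
  exists z, Zs z /\ act (phi u) y = act (phi (padd (padd u (popp b)) z)) y'.
Proof.
move=> Hy' Du Db Hb Hs.
have -> : y = act (ginv Gg (phi b)) y' by rewrite Hb (act_invK Hact).
exact: P_sub.
Qed.
Definition cr (u : pt l Gam) (j : 'I_l) : R := (u.1 j)%:~R.
Definition dd (j : 'I_l) : R := `|sr (ch_dom Phi) j|.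
Definition zz (j : 'I_l) : R := `|sr (ch_Z Phi) j|.

Lemma crD u v j : cr (padd u v) j = cr u j + cr v j.
Proof. by rewrite /cr /padd /= ffunE intrD. Qed.

Lemma crN u j : cr (popp u) j = - cr u j.
Proof. by rewrite /cr /popp /= ffunE intrN. Qed.

Lemma rsetP (S : srect l) b : rset (Gam:=Gam) S b <-> forall j, `|cr b j - (sc S j)%:~R| <= `|sr S j|.
Proof. by rewrite /rset /cr; split => H j; move: (H j); rewrite intr_norm intrB. Qed.

Lemma rset0P (S : srect l) b : (forall j, sc S j = 0) ->
  (rset (Gam:=Gam) S b <-> forall j, `|cr b j| <= `|sr S j|).
Proof.
move=> H0; rewrite rsetP; split => H j; move: (H j); by rewrite H0 subr0.
Qed.

Lemma domP u : Dom u <-> forall j, `|cr u j| <= dd j.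
Proof.
apply: rset0P. by case: HPhi => _ [_ [_ [_ [[_ h] _]]]].
Qed.

Lemma ZsP z : Zs z -> forall j, `|cr z j| <= zz j.
Proof.
move=> Hz; move: Hz; rewrite rset0P //. by case: HPhi => _ [_ [[_ h] _]].
Qed.

Lemma sumZ u : (forall j, `|cr u j| + zz j <= dd j) ->
  Defs.subset (fun v => exists z, Zs z /\ v = padd u z) Dom.
Proof.
move=> H v [z [Hz ->]]; apply/domP => j.
rewrite crD; apply: le_trans (H j).
apply: le_trans (ler_normD _ _) _; rewrite lerD2l; exact: ZsP.
Qed.

Lemma zz_ge1 j : 1 <= zz j.
Proof.
case: HPhi => _ [_ [_ [h _]]]. by move: (h j); rewrite /Lr floor_gt0.
Qed.
Variables (eps q : R) (A : srect l).
Hypothesis Heps : 0 < eps < 1 / 16.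
Hypothesis Hq : 6 * eps < q < 1 / 2.
Hypothesis HA : is_centered_rect A.

Definition aa (j : 'I_l) : R := `|sr A j|.
Definition N22 : R := (2 ^+ (22 * l))%:R.

Lemma sr_scale lam (S : srect l) j : sr (scale lam S) j = lam * sr S j.
Proof. by rewrite /scale /= ffunE. Qed.

Lemma nat_radius (S : srect l) j : is_rect S -> exists n : nat, `|sr S j| = n%:R.
Proof. move=> H; case: (H j) => n ->; exists n; exact: normr_nat. Qed.

Lemma dom_bound (B : srect l) : is_rect B ->
  Defs.subset (rset (Gam:=Gam) (scale N22 B)) Dom ->
  forall j, `|(sc B j)%:~R| + N22 * `|sr B j| <= dd j.
Proof.
move=> HB Hs j.
case: (nat_radius j HB) => m Hm.
set c := sc B j.
pose n : int := (2 ^+ (22 * l) * m)%N%:Z.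
have nR : (n%:~R : R) = N22 * `|sr B j|.
  by rewrite Hm /n /N22 -pmulrn natrM.
pose p : pt l Gam := ([ffun j' => sc B j' + (if j' == j then (if c < 0 then - n else n) else 0)], 0).
have Hp : rset (Gam:=Gam) (scale N22 B) p.
  apply/rsetP => j'; rewrite /cr /p /= ffunE sr_scale /=.
  case: eqP => [->|_].
    rewrite intrD addrC addKr normrM (@ger0_norm _ N22) ?ler0n //.
    rewrite -nR; case: (c < 0); rewrite ?intrN ?normrN ger0_norm // ler0z //.
  rewrite addr0 subrr normr0; apply: normr_ge0.
move: (Hs _ Hp) => /domP /(_ j); rewrite /cr /p /= ffunE eqxx -/c.
have n0 : (0 : R) <= n%:~R by rewrite ler0z.
case: ltrP => hc; rewrite ?intrN intrD -nR.
  rewrite (ltr0_norm (x:=c%:~R)) ?ltrz0 //.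
  rewrite ler_norml => /andP[h _]. have : (c%:~R : R) < 0 by rewrite ltrz0. lra.
rewrite (ger0_norm (x:=c%:~R)) ?ler0z //.
rewrite ler_norml => /andP[_ h]. lra.
Qed.
Lemma Z_rect : is_centered_rect (ch_Z Phi).
Proof. by case: HPhi => _ [_ [h _]]. Qed.

Lemma wit_facts delta (B : srect l) w U :
  roughly act Phi delta B w U -> rle A B ->
  Defs.subset (rset (Gam:=Gam) (scale N22 B)) Dom ->
  rle (scale (2 * delta) B) (scale eps A) -> forall j,
  [/\ aa j <= `|sr B j|, 2 * zz j <= delta * `|sr B j|,
      2 * (delta * `|sr B j|) < eps * aa j + 1,
      `|(sc B j)%:~R| + N22 * `|sr B j| <= dd j & 0 < delta < 1].
Proof.
move=> [HB [_ [_ [Hd [HZ _]]]]] HAB H22 H2 j.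
have d0 : 0 < delta by case/andP: Hd.
split => //.
- case: HA => HAr _. move: (HAB j); rewrite /Lr /aa; case: (HAr j) => n ->.
  rewrite normr_nat; exact: floor_le_nat.
- case: Z_rect => HZr _. move: (HZ j); rewrite /Lr /zz !sr_scale; case: (HZr j) => n ->.
  rewrite (normrM delta) (gtr0_norm d0) -natrM !normr_nat; by move/floor_le_nat; rewrite natrM.
- move: (H2 j) => /floor_le_lt; rewrite /Lr !sr_scale !normrM /aa.
  have e0 : 0 < eps by case/andP: Heps.
  by rewrite normr_nat (gtr0_norm d0) (gtr0_norm e0) mulrA.
- exact: dom_bound.
Qed.
Lemma N22_ge1 : 1 <= N22.
Proof. by rewrite /N22 ler1n expn_gt0. Qed.

Lemma core_in delta (B : srect l) w U y b v :
  roughly act Phi delta B w U -> rle A B ->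
  Defs.subset (rset (Gam:=Gam) (scale N22 B)) Dom ->
  rle (scale (2 * delta) B) (scale eps A) ->
  Dom b -> y = act (phi b) w -> Dom v ->
  (forall j, `|cr v j - ((sc B j)%:~R - cr b j)| <= `|sr B j| - delta * `|sr B j| - zz j) ->
  U (act (phi v) y).
Proof.
move=> Hr HAB H22 H2 Db -> Dv Hv.
have F := wit_facts Hr HAB H22 H2.
case: (Hr) => _ [_ [Hw [_ [_ [Hcore _]]]]].
have Hs : Defs.subset (fun u => exists z, Zs z /\ u = padd (padd v b) z) Dom.
  apply: sumZ => j; case: (F j) => _ h2 _ h4 /andP[d0 d1].
  move: (Hv j); rewrite crD ler_norml => /andP[e1 e2].
  have n1 := normP ((sc B j)%:~R : R). have N1 := N22_ge1.
  have b0 : 0 <= `|sr B j| by [].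
  have Nb : `|sr B j| <= N22 * `|sr B j| by rewrite ler_peMl.
  have db0 : 0 <= delta * `|sr B j| by rewrite mulr_ge0 // ltW.
  have z1 := zz_ge1 j.
  rewrite -lerBrDr ler_norml; apply/andP; split; lra.
case: (P_mul Hw Dv Db Hs) => z [Hz ->].
apply: Hcore; exists (padd (padd v b) z); split; last (split => //; apply: Hs; by exists z).
apply/rsetP => j; rewrite sr_scale normrM !crD.
case: (F j) => _ _ _ _ /andP[d0 d1].
rewrite (ger0_norm (x:= 1 - delta)); last lra.
move: (Hv j) (ZsP Hz j); rewrite !ler_norml => /andP[e1 e2] /andP[f1 f2].
apply/andP; split; rewrite mulrBl mul1r; lra.
Qed.
Lemma aa_ge0 j : 0 <= aa j. Proof. exact: normr_ge0. Qed.

Lemma numf j (D beta : R) : aa j <= beta -> 2 * zz j <= D -> 2 * D < eps * aa j + 1 ->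
  [/\ 3 < eps * aa j, 6 * (eps * aa j) <= q * aa j, 16 * (eps * aa j) <= aa j,
      2 * (q * aa j) <= aa j & 0 <= q * aa j].
Proof.
move=> h1 h2 h3.
have z1 := zz_ge1 j. have a0 := aa_ge0 j.
case/andP: Heps => e0 e1. case/andP: Hq => q0 q1.
split.
- lra.
- rewrite mulrA; apply: ler_wpM2r => //; lra.
- rewrite mulrA -[X in _ <= X]mul1r; apply: ler_wpM2r => //; lra.
- rewrite mulrA -[X in _ <= X]mul1r; apply: ler_wpM2r => //; lra.
- apply: mulr_ge0 => //; lra.
Qed.

Variable (i : 'I_l).

Definition face_miss (U : X -> Prop) (y : X) (k : int) :=
  forall v, rset (Gam:=Gam) (shift (face (scale q A) i) i k) v -> Dom v -> ~ U (act (phi v) y).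

Lemma face_set_mem k (n : 'I_l -> int) :
  (forall j, j != i -> `|(n j)%:~R| <= q * aa j) ->
  rset (Gam:=Gam) (shift (face (scale q A) i) i k) ([ffun j => if j == i then k else n j], 0).
Proof.
move=> Hn; apply/rsetP => j; rewrite /cr /= !ffunE.
case: HA => _ HA0; rewrite HA0 add0r.
case: (boolP (j == i)) => hj; first by rewrite subrr normr0.
rewrite subr0 normrM; case/andP: Hq => q0 _.
have qp : 0 < q by case/andP: Heps => e0 _; lra.
rewrite (gtr0_norm qp); exact: Hn.
Qed.
Lemma face_bound delta (B : srect l) w U y b k :
  roughly act Phi delta B w U -> rle A B ->
  Defs.subset (rset (Gam:=Gam) (scale N22 B)) Dom ->
  rle (scale (2 * delta) B) (scale eps A) ->
  Dom b -> y = act (phi b) w ->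
  (forall j, `|cr b j - (sc B j)%:~R| <= `|sr B j| + delta * `|sr B j|) ->
  `|(k%:~R : R)| <= q * aa i -> face_miss U y k ->
  ~ (`|k%:~R - ((sc B i)%:~R - cr b i)| <= `|sr B i| - delta * `|sr B i| - zz i).
Proof.
move=> Hr HAB H22 H2 Db Hy Hout Hk Hm Hki.
have F := wit_facts Hr HAB H22 H2.
have : forall j, exists n : int, j != i ->
    `|(n%:~R : R)| <= q * aa j /\
    `|n%:~R - ((sc B j)%:~R - cr b j)| <= `|sr B j| - delta * `|sr B j| - zz j.
  move=> j; clear Hy; case: (F j) => h1 h2 h3 h4 /andP[d0 d1].
  case: (numf h1 h2 h3) => n1 n2 n3 n4 n5.
  move: (Hout j); rewrite ler_norml => /andP[o1 o2].
  have db0 : 0 <= delta * `|sr B j| by rewrite mulr_ge0 // ltW.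
  have z1 := zz_ge1 j.
  have [n [e1 e2 e3 e4]] := (@mult_between (1:R) ((sc B j)%:~R - cr b j - (`|sr B j| - delta * `|sr B j| - zz j))
           (- (q * aa j)) ((sc B j)%:~R - cr b j + (`|sr B j| - delta * `|sr B j| - zz j))
           (q * aa j)) ltac:(lra) ltac:(lra) ltac:(lra) ltac:(lra) ltac:(lra).
  rewrite !mulr1 in e1 e2 e3 e4; exists n => _.
  rewrite !ler_norml; split; apply/andP; split.
  - lra.
  - lra.
  - lra.
  - lra.
case/fin_all_exists => n Hn.
pose v : pt l Gam := ([ffun j => if j == i then k else n j], 0).
have crv : forall j, cr v j = (if j == i then k else n j)%:~R by move=> j; rewrite /cr /v /= ffunE.
have Dv : Dom v.
  apply/domP => j; rewrite crv; clear Hy.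
  case: (F j) => h1 h2 h3 h4 /andP[d0 d1].
  case: (numf h1 h2 h3) => n1 n2 n3 n4 n5.
  have db0 : 0 <= delta * `|sr B j| by rewrite mulr_ge0 // ltW.
  have Nb : `|sr B j| <= N22 * `|sr B j| by rewrite ler_peMl // N22_ge1.
  have c0 := normr_ge0 ((sc B j)%:~R : R).
  have hq : `|(if j == i then k else n j)%:~R : R| <= q * aa j.
    case: (boolP (j == i)) => hj; last by case: (Hn j hj).
    by rewrite (eqP hj).
  lra.
apply: (Hm v _ Dv).
  apply: face_set_mem => j hj; by case: (Hn j hj).
apply: (core_in Hr HAB H22 H2 Db Hy Dv) => j; rewrite crv.
case: (boolP (j == i)) => hj; first by rewrite (eqP hj).
by case: (Hn j hj).
Qed.
Definition N19 : R := (2 ^+ (19 * l))%:R.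
Definition Mset := msum (rset (Gam:=Gam) (scale (2 ^+ (19 * l))%:R (face A i)))
                        (rset (Gam:=Gam) (scale (5 * q) A)).

Lemma N19_ge0 : 0 <= N19. Proof. by rewrite /N19 ler0n. Qed.

Lemma M_mem s : (forall j, j != i -> `|cr s j| <= N19 * aa j) ->
  `|cr s i| <= 5 * (q * aa i) -> Mset s.
Proof.
move=> H1 H2.
case: HA => _ HA0.
have qp : 0 < q by case/andP: Heps => e0 _; case/andP: Hq => q0 _; lra.
exists ([ffun j => if j == i then 0 else s.1 j], s.2).
exists ([ffun j => if j == i then s.1 i else 0], 0).
split; [|split].
- apply/rset0P => [j|j]; first by rewrite /= HA0.
  rewrite /cr /= !ffunE; case: (boolP (j == i)) => hj.
    by rewrite normr0 mulr0 normr0.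
  rewrite normrM ger0_norm; last exact: N19_ge0.
  exact: H1.
- apply/rset0P => [j|j]; first by rewrite /= HA0.
  rewrite /cr /= !ffunE; case: (boolP (j == i)) => hj.
    rewrite (eqP hj) normrM (gtr0_norm (x := 5 * q)) ?mulr_gt0 // -mulrA; exact: H2.
  rewrite normr0; exact: normr_ge0.
- case: s {H1 H2} => s1 s2; rewrite /padd /=; congr pair; last by rewrite addr0.
  apply/ffunP => j; rewrite !ffunE; case: (boolP (j == i)) => hj.
    by rewrite (eqP hj) add0r.
  by rewrite addr0.
Qed.

Lemma disj_bound yr ys (D : pt l Gam) : XH yr -> XH ys -> Dom D -> ys = act (phi D) yr ->
  (forall j, j != i -> `|cr D j| + zz j <= N19 * aa j) ->
  (forall j, N19 * aa j + 5 * (q * aa j) <= dd j) ->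
  2 * zz i + 1 <= 10 * (q * aa i) ->
  (forall z, ~ (phiset act Phi Mset yr z /\ phiset act Phi Mset ys z)) ->
  10 * (q * aa i) - zz i - 1 < `|cr D i|.
Proof.
move=> Hyr Hys DD Hys' HDj Hdd Hzq Hdisj.
rewrite ltNge; apply/negP => Hsm; move: Hys'.
have z0 := zz_ge1 i.
have a0 := aa_ge0 i.
have Nq0 : 0 <= N19 * aa i by apply: mulr_ge0 => //; exact: N19_ge0.
have qn0 : 0 <= q * aa i.
  apply: mulr_ge0 => //; case/andP: Heps => e0 _; case/andP: Hq => q0 _; lra.
move: Hsm; rewrite ler_norml => /andP[s1 s2].
have [n [e1 e2 e3 e4]] : exists n : int,
   [/\ - (5 * (q * aa i)) <= n%:~R * 1, n%:~R * 1 <= 5 * (q * aa i),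
        cr D i - (5 * (q * aa i) - zz i) <= n%:~R * 1 & n%:~R * 1 <= cr D i + (5 * (q * aa i) - zz i)].
  by apply: (@mult_between (1:R)); lra.
rewrite !mulr1 in e1 e2 e3 e4.
pose u : pt l Gam := ([ffun j => if j == i then n else 0], 0).
have cru : forall j, cr u j = if j == i then n%:~R else 0.
  by move=> j; rewrite /cr /u /= ffunE; case: (j == i).
have qpos : 0 <= q by case/andP: Heps => e0 _; case/andP: Hq => q0 _; lra.
have Du : Dom u.
  apply/domP => j; rewrite cru.
  case: (boolP (j == i)) => hj; last first.
    rewrite normr0; apply: le_trans (Hdd j); apply: addr_ge0.
      by apply: mulr_ge0; [exact: N19_ge0|exact: aa_ge0].
    by apply: mulr_ge0 => //; apply: mulr_ge0 => //; exact: aa_ge0.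
  rewrite (eqP hj); have h3 := Hdd i.
  rewrite ler_norml; apply/andP; split; lra.
have Hs : Defs.subset (fun v => exists z, Zs z /\ v = padd (padd u (popp D)) z) Dom.
  apply: sumZ => j; rewrite crD crN cru.
  case: (boolP (j == i)) => hj.
    rewrite (eqP hj) -lerBrDr ler_norml; have h := Hdd i.
    have h' : 0 <= N19 * aa i by apply: mulr_ge0; [exact: N19_ge0|exact: aa_ge0].
    apply/andP; split; lra.
  rewrite add0r normrN; move: (Hdd j) (HDj j hj).
  have : 0 <= q * aa j.
    apply: mulr_ge0; last exact: aa_ge0.
    case/andP: Heps => e0 _; case/andP: Hq => q0 _; lra.
  lra.
move=> Hys'; case: (rebase Hys Du DD Hys' Hs) => z' [Hz' He].
apply: (Hdisj (act (phi u) yr)); split.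
  exists u; split; last by split.
  apply: M_mem => [j hj|]; first by rewrite cru (negbTE hj) normr0; apply: mulr_ge0; [exact: N19_ge0|exact: aa_ge0].
  rewrite cru eqxx ler_norml; apply/andP; split; lra.
exists (padd (padd u (popp D)) z'); split; last (split => //; apply: Hs; by exists z').
have zb := ZsP Hz'.
apply: M_mem => [j hj|].
  rewrite !crD crN cru (negbTE hj) add0r.
  apply: le_trans (ler_normD _ _) _; rewrite normrN.
  apply: le_trans (HDj j hj); rewrite lerD2l; exact: zb.
rewrite !crD crN cru eqxx.
move: (zb i); rewrite !ler_norml => /andP[f1 f2]; apply/andP; split; lra.
Qed.
Definition N17 : R := (2 ^+ (17 * l))%:R.

Lemma l_pos : (0 < l)%N.
Proof. by case: i => k; case: l => // ? ?. Qed.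

Lemma Nfacts : [/\ 1 <= N17, 4 * N17 <= N19 & 8 * N19 <= N22].
Proof.
have lp := l_pos.
rewrite /N17 /N19 /N22 !natrXE; split.
- by rewrite ler1n expn_gt0.
- rewrite -[4]/((2^2)%N)%:R -natrM ler_nat -expnD leq_exp2l //; lia.
- rewrite -[8]/((2^3)%N)%:R -natrM ler_nat -expnD leq_exp2l //; lia.
Qed.
Lemma final_real (bt D zt Q E kk er es dz Di : R) :
  1 <= zt -> 2 * zt <= D -> 2 * D < E + 1 -> 6 * E <= Q -> 0 <= D ->
  `|er| <= bt + D -> `|es| <= bt + D -> Q - 1 < `|kk| -> `|kk| <= Q ->
  ~ (`|kk - er| <= bt - D - zt) -> ~ (`|kk - es| <= bt - D - zt) ->
  Di = er - es + dz -> `|dz| <= zt -> 10 * Q - zt - 1 < `|Di| -> False.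
Proof.
move=> h1 h2 h3 h4 h5 her hes hk1 hk2 hfr hfs hD hdz hDi.
move/negP: hfr; rewrite -ltNge ltr_normr => /orP hfr.
move/negP: hfs; rewrite -ltNge ltr_normr => /orP hfs.
move: her hes hdz; rewrite !ler_norml => /andP[r1 r2] /andP[s1 s2] /andP[d1 d2].
move: hDi; rewrite hD ltr_normr => /orP hDi.
case: (lerP 0 kk) => hk.
  rewrite ger0_norm // in hk1 hk2.
  case: hfr => ?; case: hfs => ?; case: hDi => ?; lra.
rewrite ltr0_norm // in hk1 hk2.
case: hfr => ?; case: hfs => ?; case: hDi => ?; lra.
Qed.
Lemma jfA j : [/\ 0 <= aa j, aa j <= N17 * aa j, 4 * (N17 * aa j) <= N19 * aa j
              & 8 * (N19 * aa j) <= N22 * aa j].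
Proof.
have a0 := aa_ge0 j. case: Nfacts => n1 n2 n3.
split => //.
- by rewrite ler_peMl.
- by rewrite mulrA ler_wpM2r.
- by rewrite mulrA ler_wpM2r.
Qed.

Lemma jfB (delta bt : R) j : aa j <= bt -> 0 < delta < 1 ->
  [/\ N22 * aa j <= N22 * bt, 32 * bt <= N22 * bt, delta * bt <= bt & 0 <= delta * bt].
Proof.
move=> h /andP[d0 d1]. case: Nfacts => n1 n2 n3.
have a0 := aa_ge0 j. have b0 : 0 <= bt by lra.
have N0 : 0 <= N22 by have := N22_ge1; lra.
split.
- by rewrite ler_wpM2l.
- by apply: ler_wpM2r => //; lra.
- by rewrite ler_piMl // ltW.
- by rewrite mulr_ge0 // ltW.
Qed.

Variables (F : X -> X -> Prop).
Hypothesis HF : rectangular act Phi A eps F.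

Lemma F_refl y0 : F y0 y0. Proof. by case: HF => [[h _] _]. Qed.
Lemma F_sym y1 y2 : F y1 y2 -> F y2 y1. Proof. by case: HF => [[_ [h _]] _]; apply: h. Qed.
Lemma F_trans y1 y2 y3 : F y1 y2 -> F y2 y3 -> F y1 y3.
Proof. by case: HF => [[_ [_ h]] _]; apply: h. Qed.

Lemma outer_bound delta (B : srect l) b : 0 < delta ->
  rset (Gam:=Gam) (scale (1 + delta) B) b ->
  forall j, `|cr b j - (sc B j)%:~R| <= `|sr B j| + delta * `|sr B j|.
Proof.
move=> d0 /rsetP H j; move: (H j); rewrite sr_scale normrM /= (gtr0_norm (x:=1+delta)).
  by rewrite mulrDl mul1r.
lra.
Qed.

Lemma wit_of y0 : XH y0 -> exists delta (B : srect l) w b,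
  [/\ roughly act Phi delta B w (F y0), rle A B,
      Defs.subset (rset (Gam:=Gam) (scale N22 B)) Dom,
      rle (scale (2 * delta) B) (scale eps A) &
      [/\ Dom b, y0 = act (phi b) w &
      forall j, `|cr b j - (sc B j)%:~R| <= `|sr B j| + delta * `|sr B j|]].
Proof.
move=> Hy. case: HF => _ [_ Hr].
case: (Hr y0); first by exists y0; split => //; exact: F_refl.
move=> delta [B [w [Hw [d0 [Hro [HAB [H22 H2]]]]]]].
case: (Hro) => _ [_ [_ [_ [_ [_ Hout]]]]].
case: (Hout y0 (F_refl y0)) => b [Hb [Db Hbe]].
exists delta, B, w, b; split => //; split => //.
exact: outer_bound.
Qed.
Ltac clrX := repeat match goal with H : @eq X _ _ |- _ => clear H end.

Lemma face_miss_sub U U' y0 k : (forall p, U' p -> U p) -> face_miss U y0 k -> face_miss U' y0 k.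
Proof. move=> h H v Hv Dv HU; exact: (H v Hv Dv (h _ HU)). Qed.

Definition NFprop delta (B : srect l) j := [/\ 0 <= aa j, zz j <= aa j, 2 * zz j + 1 <= 10 * (q * aa j),
     N19 * aa j + 5 * (q * aa j) <= dd j &
     [/\ 2 * (N17 * aa j) + 2 * zz j <= N19 * aa j,
         2 * (`|sr B j| + delta * `|sr B j|) + zz j <= dd j - `|(sc B j)%:~R| &
         2 * (N17 * aa j) + zz j <= dd j]].

Lemma NF_of delta (B : srect l) j :
  aa j <= `|sr B j| -> 2 * zz j <= delta * `|sr B j| ->
  2 * (delta * `|sr B j|) < eps * aa j + 1 ->
  `|(sc B j)%:~R| + N22 * `|sr B j| <= dd j -> 0 < delta < 1 -> NFprop delta B j.
Proof.
move=> h1 h2 h3 h4 hd.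
case: (numf h1 h2 h3) => n1 n2 n3 n4 n5.
case: (jfA j) => a1 a2 a3 a4.
case: (jfB h1 hd) => b1 b2 b3 b4.
have z1 := zz_ge1 j. have c0 := normr_ge0 ((sc B j)%:~R : R).
split; [exact: a1|lra|lra|lra|split; lra].
Qed.

Lemma pair_false x yr ys sr0 ss k :
  XH yr -> XH ys -> F yr ys ->
  Dom sr0 -> Dom ss -> yr = act (phi sr0) x -> ys = act (phi ss) x ->
  (forall j, `|cr sr0 j| <= N17 * aa j) -> (forall j, `|cr ss j| <= N17 * aa j) ->
  q * aa i - 1 < `|(k%:~R : R)| -> `|(k%:~R : R)| <= q * aa i ->
  face_miss (F yr) yr k -> face_miss (F ys) ys k ->
  (forall z, ~ (phiset act Phi Mset yr z /\ phiset act Phi Mset ys z)) -> False.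
Proof.
move=> Hyr Hys Frs Dsr Dss Hxr Hxs Bsr Bss Hk1 Hk2 Hmr Hms Hdisj.
case: (wit_of Hyr) => delta [B [w [br [Hro HAB H22 H2 [Dbr Hbr Hout_r]]]]].
have W := wit_facts Hro HAB H22 H2.
case: (Hro) => _ [_ [_ [Hd [_ [_ Hout]]]]].
have d0 : 0 < delta by case/andP: Hd.
case: (Hout ys Frs) => bs [Hbs0 [Dbs Hbs]].
have Hout_s := outer_bound d0 Hbs0.
have nr := face_bound Hro HAB H22 H2 Dbr Hbr Hout_r Hk2 Hmr.
have Hms' : face_miss (F yr) ys k.
  apply: face_miss_sub Hms => p Hp; apply: F_trans Hp; exact: F_sym.
have ns := face_bound Hro HAB H22 H2 Dbs Hbs Hout_s Hk2 Hms'.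
have NF : forall j, NFprop delta B j.
  move=> j; case: (W j) => h1 h2 h3 h4 hd; exact: NF_of.
have Hs1 : Defs.subset (fun v => exists z, Zs z /\ v = padd (padd ss (popp sr0)) z) Dom.
  apply: sumZ => j; rewrite crD crN; clrX.
  case: (NF j) => _ _ _ _ [_ _ h].
  move: (Bsr j) (Bss j); rewrite !ler_norml => /andP[u1 u2] /andP[v1 v2].
  rewrite -lerBrDr ler_norml; apply/andP; split; lra.
case: (rebase Hyr Dss Dsr Hxr Hs1) => z2 [Hz2 He2].
have Hs2 : Defs.subset (fun v => exists z, Zs z /\ v = padd (padd bs (popp br)) z) Dom.
  apply: sumZ => j; rewrite crD crN; clrX.
  case: (NF j) => _ _ _ _ [_ h _].
  move: (Hout_r j) (Hout_s j); rewrite !ler_norml => /andP[u1 u2] /andP[v1 v2].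
  have c0 := normP ((sc B j)%:~R : R).
  rewrite -lerBrDr ler_norml; apply/andP; split; lra.
case: (rebase Hyr Dbs Dbr Hbr Hs2) => z1 [Hz1 He1].
have DD1 : Dom (padd (padd ss (popp sr0)) z2) by apply: Hs1; exists z2.
have DD2 : Dom (padd (padd bs (popp br)) z1) by apply: Hs2; exists z1.
have Heq : padd (padd ss (popp sr0)) z2 = padd (padd bs (popp br)) z1.
  apply: (P_inj Hyr DD1 DD2). by rewrite -He2 -He1 -Hxs -Hbs.
have Hdb := disj_bound Hyr Hys DD1 (etrans Hxs He2).
have Hd1 : 10 * (q * aa i) - zz i - 1 < `|cr (padd (padd ss (popp sr0)) z2) i|.
  apply: Hdb => //.
  - move=> j hj; rewrite !crD crN; clrX.
    case: (NF j) => _ _ _ _ [h _ _].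
    move: (Bsr j) (Bss j) (ZsP Hz2 j); rewrite !ler_norml => /andP[u1 u2] /andP[v1 v2] /andP[w1 w2].
    rewrite -lerBrDr ler_norml; apply/andP; split; lra.
  - by move=> j; case: (NF j).
  - by case: (NF i).
case: (W i) => h1 h2 h3 h4 hd.
case: (numf h1 h2 h3) => n1 n2 n3 n4 n5.
have z1i := zz_ge1 i.
have db0 : 0 <= delta * `|sr B i| by rewrite mulr_ge0 // ltW.
apply: (@final_real (`|sr B i|) (delta * `|sr B i|) (zz i) (q * aa i) (eps * aa i) k%:~R
   ((sc B i)%:~R - cr br i) ((sc B i)%:~R - cr bs i) (cr z1 i)
   (cr (padd (padd ss (popp sr0)) z2) i)) => //.
- by rewrite distrC.
- by rewrite distrC.
- rewrite Heq !crD crN; clrX; lra.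
- exact: ZsP.
Qed.
Definition half : nat := (2 ^ (17 * l + 3))%N.
Definition MM : nat := (2 ^ (17 * l + 4))%N.
Definition mesh (j : 'I_l) : int := Num.floor (aa j / 2).
Definition gridpt (f : {ffun 'I_l -> 'I_MM}) : pt l Gam :=
  ([ffun j => ((f j)%:Z - half%:Z) * mesh j], 0).

Lemma half_R : (half%:R : R) = 8 * N17.
Proof. by rewrite /half /N17 natrXE expnD natrM mulrC. Qed.

Lemma MM_half : MM = (2 * half)%N.
Proof. by rewrite /MM /half addnS expnS. Qed.

Lemma natZR (n : nat) : ((n%:Z)%:~R : R) = n%:R.
Proof. by rewrite -pmulrn. Qed.

Lemma grid_coord (k : int) : (`|(k%:~R : R)| < 8 * N17) ->
  exists n : 'I_MM, ((n : nat)%:Z - half%:Z) = k.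
Proof.
move=> H.
have Hk : (`|k| < (half : int))%R.
  by rewrite -(ltr_int R) intr_norm natZR half_R.
have h0 : (0 <= k + half%:Z)%R.
  move: Hk; rewrite ltr_norml => /andP[h _]; rewrite -lerBlDr sub0r; exact: ltW.
have hl : (absz (k + half%:Z)%R < MM)%N.
  rewrite MM_half -ltz_nat gez0_abs // -(ltr_int R).
  rewrite intrD !natZR natrM half_R.
  move: H; rewrite ltr_norml => /andP[_ h]. lra.
exists (Ordinal hl) => /=; rewrite gez0_abs //; by rewrite addrK.
Qed.
Lemma mesh_facts j : 48 < aa j -> [/\ 0 < ((mesh j)%:~R : R), ((mesh j)%:~R : R) <= aa j / 2 & aa j / 2 - 1 < ((mesh j)%:~R : R)].
Proof.
move=> h.
have f1 := floor_le (aa j / 2). have f2 := floorD1_gt (aa j / 2).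
rewrite intrD in f2. rewrite /mesh; split; lra.
Qed.

Lemma grid_exists x y0 s0 : XH y0 -> Dom s0 -> y0 = act (phi s0) x ->
  (forall j, `|cr s0 j| <= N17 * aa j) ->
  exists f : {ffun 'I_l -> 'I_MM}, F y0 (act (phi (gridpt f)) x).
Proof.
move=> Hy Ds Hxs Bs.
case: (wit_of Hy) => delta [B [w [b [Hro HAB H22 H2 [Db Hb Hout]]]]].
have W := wit_facts Hro HAB H22 H2.
have Hk : forall j, exists n : 'I_MM, let g := ((((n : nat)%:Z - half%:Z) * mesh j)%:~R : R) in
   `|g - cr s0 j - ((sc B j)%:~R - cr b j)| <= `|sr B j| - delta * `|sr B j| - 2 * zz j /\
   `|g - cr s0 j| <= aa j.
  move=> j; clrX.
  case: (W j) => h1 h2 h3 h4 hd.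
  case: (numf h1 h2 h3) => n1 n2 n3 n4 n5.
  case: (jfA j) => a1 a2 a3 a4.
  case: (jfB h1 hd) => b1 b2 b3 b4.
  have z1 := zz_ge1 j.
  have [m0 m1 m2] : [/\ 0 < ((mesh j)%:~R : R), ((mesh j)%:~R : R) <= aa j / 2 & aa j / 2 - 1 < ((mesh j)%:~R : R)].
    apply: mesh_facts; lra.
  move: (Hout j) (Bs j); rewrite !ler_norml => /andP[o1 o2] /andP[t1 t2].
  have [k [e1 e2 e3 e4]] := @mult_between ((mesh j)%:~R : R)
     (cr s0 j + ((sc B j)%:~R - cr b j) - (`|sr B j| - delta * `|sr B j| - 2 * zz j))
     (cr s0 j - aa j)
     (cr s0 j + ((sc B j)%:~R - cr b j) + (`|sr B j| - delta * `|sr B j| - 2 * zz j))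
     (cr s0 j + aa j) m0 ltac:(lra) ltac:(lra) ltac:(lra) ltac:(lra).
  have kb : `|(k%:~R : R)| < 8 * N17.
    rewrite ltNge; apply/negP => hk.
    have hkm : 8 * N17 * (mesh j)%:~R <= `|(k%:~R : R)| * (mesh j)%:~R.
      by apply: ler_wpM2r => //; apply: ltW.
    have hNm : N17 * (aa j / 2 - 1) <= N17 * (mesh j)%:~R.
      apply: ler_wpM2l; [case: Nfacts => ? _ _; lra|]; lra.
    have hab : `|(k%:~R : R)| * (mesh j)%:~R <= N17 * aa j + aa j.
      rewrite -(gtr0_norm m0) -normrM ler_norml; apply/andP; split; lra.
    case: Nfacts => N1 _ _.
    have : N17 * (aa j / 2 - 1) = N17 * aa j / 2 - N17 by rewrite mulrBr mulr1 mulrA.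
    have : 48 * N17 <= aa j * N17 by apply: ler_wpM2r; lra.
    lra.
  case: (grid_coord kb) => n hn; exists n; rewrite hn.
  split; rewrite ler_norml; apply/andP; split; lra.
have [fk Hfk] := fin_all_exists Hk.
exists [ffun j => fk j].
have crg : forall j, cr (gridpt [ffun j => fk j]) j = ((((fk j : nat)%:Z - half%:Z) * mesh j)%:~R : R).
  by move=> j; rewrite /cr /gridpt /= !ffunE.
have Dg : Dom (gridpt [ffun j => fk j]).
  apply/domP => j; rewrite crg; clrX.
  case: (Hfk j) => _ h.
  case: (W j) => h1 h2 h3 h4 hd. case: (jfA j) => a1 a2 a3 a4. case: (jfB h1 hd) => b1 b2 b3 b4.
  have c0 := normr_ge0 ((sc B j)%:~R : R).
  move: h (Bs j); rewrite !ler_norml => /andP[u1 u2] /andP[v1 v2]; apply/andP; split; lra.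
have Hs : Defs.subset (fun v => exists z, Zs z /\ v = padd (padd (gridpt [ffun j => fk j]) (popp s0)) z) Dom.
  apply: sumZ => j; rewrite crD crN crg; clrX.
  case: (Hfk j) => _ h.
  case: (W j) => h1 h2 h3 h4 hd. case: (numf h1 h2 h3) => n1 n2 n3 n4 n5.
  case: (jfA j) => a1 a2 a3 a4. case: (jfB h1 hd) => b1 b2 b3 b4.
  have c0 := normr_ge0 ((sc B j)%:~R : R).
  move: h; rewrite -lerBrDr !ler_norml => /andP[u1 u2]; apply/andP; split; lra.
case: (rebase Hy Dg Ds Hxs Hs) => z [Hz ->].
apply: (core_in Hro HAB H22 H2 Db Hb); first by apply: Hs; exists z.
move=> j; rewrite !crD crN crg; case: (Hfk j) => h _; clrX.
move: h (ZsP Hz j); rewrite !ler_norml => /andP[u1 u2] /andP[v1 v2]; apply/andP; split; lra.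
Qed.
Lemma side_of E y0 : (forall a b, F a b -> E a b) ->
  boundary act Phi E (scale q A) i y0 ->
  face_miss (F y0) y0 (Lr (scale q A) i) \/ face_miss (F y0) y0 (- Lr (scale q A) i).
Proof.
move=> HFE [_ Hb].
have nn : ~ (~ face_miss (F y0) y0 (Lr (scale q A) i) /\ ~ face_miss (F y0) y0 (- Lr (scale q A) i)).
  move=> [Hp Hm]; apply: Hm => vm Hvm Dvm Fm; apply: Hp => vp Hvp Dvp Fp.
  apply: (Hb y0); split.
    exists (act (phi vm) y0); split; first by exists vm.
    by apply: HFE; apply: F_sym.
  exists (act (phi vp) y0); split; first by exists vp.
  by apply: HFE; apply: F_sym.
case: (Classical_Prop.classic (face_miss (F y0) y0 (Lr (scale q A) i))) => h; first by left.
case: (Classical_Prop.classic (face_miss (F y0) y0 (- Lr (scale q A) i))) => h'; first by right.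
by exfalso; apply: nn.
Qed.

Lemma main_sec (E : X -> X -> Prop) (HFE : forall a b, F a b -> E a b) (x : X)
  (t : nat) (y : 'I_t -> X)
  (Hyb : forall r, boundary act Phi E (scale q A) i (y r))
  (Hyx : forall r, phiset act Phi (rset (Gam:=Gam) (scale (2 ^+ (17 * l))%:R A)) x (y r))
  (Hdisj : forall r s, r != s -> forall z,
     ~ (phiset act Phi Mset (y r) z /\ phiset act Phi Mset (y s) z)) :
  (t <= 2 ^ (22 * l ^ 2))%N.
Proof.
set L := Lr (scale q A) i.
have qp : 0 <= q by case/andP: Heps => e0 _; case/andP: Hq => q0 _; lra.
have HL : q * aa i - 1 < (L%:~R : R) /\ (L%:~R : R) <= q * aa i /\ 0 <= (L%:~R : R).
  rewrite /L /Lr sr_scale normrM (ger0_norm qp) -/(aa i).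
  have f1 := floor_le (q * aa i). have f2 := floorD1_gt (q * aa i).
  rewrite intrD in f2.
  have : 0 <= q * aa i by apply: mulr_ge0 => //; exact: aa_ge0.
  rewrite -floor_ge0 -(ler_int R) => h.
  split; lra.
case: HL => HL1 [HL2 HL3].
have XHy : forall r, XH (y r) by move=> r; case: (Hyb r).
have Hs : forall r, exists s0, [/\ Dom s0, y r = act (phi s0) x & forall j, `|cr s0 j| <= N17 * aa j].
  move=> r; case: (Hyx r) => s0 [Hs0 [Ds0 He]]; exists s0; split => // j.
  move: Hs0; rewrite rset0P; last by case: HA => _ h j'; rewrite /scale /= h.
  move=> /(_ j); rewrite sr_scale normrM ger0_norm //; exact: ler0n.
have Hkey : forall r, exists kk : ({ffun 'I_l -> 'I_MM} * bool)%type,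
    F (y r) (act (phi (gridpt kk.1)) x) /\
    (kk.2 -> face_miss (F (y r)) (y r) L) /\ (~~ kk.2 -> face_miss (F (y r)) (y r) (- L)).
  move=> r; case: (Hs r) => s0 [Ds0 He Bs].
  case: (grid_exists (XHy r) Ds0 He Bs) => f Hf.
  case: (side_of HFE (Hyb r)) => hs.
    by exists (f, true); split => //; split.
  by exists (f, false); split => //; split.
have [key Hk] := fin_all_exists Hkey.
have inj : injective key.
  move=> r s Hrs; apply/eqP; apply/negP => /negP hne.
  case: (Hk r) => Fr [Pr Mr]; case: (Hk s) => Fs [Ps Ms]; rewrite -Hrs in Fs Ps Ms.
  case: (Hs r) => sr0 [Dr Er Br]; case: (Hs s) => ss [Ds Es Bs].
  have Frs : F (y r) (y s) by apply: F_trans Fr _; apply: F_sym.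
  case: (boolP (key r).2) => hb.
    apply: (pair_false (XHy r) (XHy s) Frs Dr Ds Er Es Br Bs (k := L)) => //.
    - by rewrite ger0_norm //; lra.
    - by rewrite ger0_norm.
    - exact: Pr.
    - exact: Ps.
    - exact: Hdisj.
  apply: (pair_false (XHy r) (XHy s) Frs Dr Ds Er Es Br Bs (k := - L)) => //.
  - by rewrite intrN normrN ger0_norm //; lra.
  - by rewrite intrN normrN ger0_norm.
  - exact: Mr.
  - exact: Ms.
  - exact: Hdisj.
have := leq_card key inj.
rewrite card_ord card_prod card_ffun !card_ord card_bool => h.
apply: leq_trans h _.
rewrite /MM -expnM -expnSr leq_exp2l //.
have lp := l_pos. nia.
Qed.
End Chart.

Theorem lemma6p5 (G : countType) (Gg : group_on G) (X : Type)
  (act : G -> X -> X) (Hact : is_action Gg act)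
  (l : nat) (Gam : finZmodType) (Phi : chart G l Gam) (HPhi : is_chart Gg Phi)
  (eps q : R) (Heps : 0 < eps < 1 / 16) (Hq : 6 * eps < q < 1 / 2)
  (A : srect l) (HA : is_centered_rect A)
  (E : X -> X -> Prop) (HE : is_equiv E)
  (Hsub : sub_rectangular act Phi A eps E)
  (x : X) (Hx : inXH act Phi x) (i : 'I_l)
  (t : nat) (y : 'I_t -> X)
  (Hyb : forall r, boundary act Phi E (scale q A) i (y r))
  (Hyx : forall r, phiset act Phi (rset (Gam:=Gam) (scale (2 ^+ (17 * l))%:R A)) x (y r))
  (Hdisj : forall r s, r != s -> forall z,
     ~ (phiset act Phi (msum (rset (Gam:=Gam) (scale (2 ^+ (19 * l))%:R (face A i)))
                             (rset (Gam:=Gam) (scale (5 * q) A))) (y r) z /\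
        phiset act Phi (msum (rset (Gam:=Gam) (scale (2 ^+ (19 * l))%:R (face A i)))
                             (rset (Gam:=Gam) (scale (5 * q) A))) (y s) z)) :
  (t <= 2 ^ (22 * l ^ 2))%N.
Proof.
case: Hsub => F [HF HFE].
exact: (main_sec Hact HPhi Heps Hq HA HF HFE Hyb Hyx Hdisj).
Qed.
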